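(* Let $V$ be a finite-dimensional real vector space, let $T_1,\dots,T_n\in V^*$ be linearly independent, and let $Q$ be a quadratic form on $V$ which is not identically zero on $\bigcap_{i=1}^n\ker(T_i)$. If $F\in\mathbb{R}[z_0,\dots,z_n]$ is a polynomial such that the function $V\to\mathbb{R}$, $v\mapsto F(Q(v),T_1(v),\dots,T_n(v))$, is identically zero, then $F$ is the zero polynomial. *)

(* Defs.v *)
From HB Require Import structures.
From mathcomp Require Import all_boot all_order all_algebra.
From mathcomp Require Import reals.
From mathcomp Require Import mpoly.

Set Implicit Arguments.
Unset Strict Implicit.
Unset Printing Implicit Defensive.

Import Order.TTheory GRing.Theory Num.Theory.
Local Open Scope ring_scope.

Definition is_quadratic_form (R : realType) (V : vectType R) (Q : V -> R) : Prop :=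
  exists B : V -> V -> R,
    [/\ (forall u v, B u v = B v u),
        (forall (a : R) (u w v : V), B (a *: u + w) v = a * B u v + B w v)
      & (forall v, Q v = B v v)].

Definition lin_indep_functionals (R : realType) (V : vectType R) (n : nat)
    (T : 'I_n -> {linear V -> R^o}) : Prop :=
  forall c : 'I_n -> R,
    (forall v : V, \sum_(i < n) c i * T i v = 0) -> forall i, c i = 0.

Definition QT_point (R : realType) (V : vectType R) (n : nat)
    (Q : V -> R) (T : 'I_n -> {linear V -> R^o}) (v : V) : 'I_n.+1 -> R :=
  fun i => match unlift ord0 i with None => Q v | Some j => T j v end.

(* Main.v *)
Require Import Defs.
From HB Require Import structures.
From mathcomp Require Import all_boot all_order all_algebra.
From mathcomp Require Import reals.
From mathcomp Require Import mpoly.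
From mathcomp Require Import ring.
Import GRing.Theory Num.Theory.
Local Open Scope ring_scope.
Import VectorInternalTheory.

Definition pt {R : nzRingType} {k} (x : R) (t : 'I_k -> R) : 'I_k.+1 -> R :=
  fun i => match unlift ord0 i with None => x | Some j => t j end.

Definition mtail {k} (m : 'X_{1..k.+1}) : 'X_{1..k} := [multinom m (lift ord0 i) | i < k].

Lemma mnm_eq_split k (m m' : 'X_{1..k.+1}) :
  (m == m') = (m ord0 == m' ord0) && (mtail m == mtail m').
Proof.
apply/eqP/andP => [->|[/eqP h0 /eqP ht]]; first by split.
apply/mnmP => i; case: (unliftP ord0 i) => [j ->|->] //.
have := congr1 (fun mm : 'X_{1..k} => mm j) ht; rewrite /mtail /= !mnmE; done.
Qed.

Lemma decomp {R : realType} {k} (F : {mpoly R[k.+1]}) :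
  exists G : nat -> {mpoly R[k]},
   (forall m, F@_m = (G (m ord0))@_(mtail m)) /\
   (forall t, exists p : {poly R},
      (forall x, F.@[pt x t] = p.[x]) /\ forall e, p`_e = (G e).@[t]).
Proof.
elim/mpolyind: F => [|c m p _ _ [G [HG Hp]]].
  exists (fun _ => 0); split => [m|t]; first by rewrite !mcoeff0.
  by exists 0; split => [x|e]; rewrite ?meval0 ?horner0 ?coef0.
exists (fun e => G e + (if e == m ord0 then c *: 'X_[mtail m] else 0)).
split.
  move=> m'; rewrite !mcoeffD mcoeffZ mcoeffX HG addrC; congr (_ + _).
  rewrite mnm_eq_split (eq_sym (m ord0)); case: eqP => [e0|_] /=; last first.
    by rewrite mcoeff0 mulr0.
  by rewrite mcoeffZ mcoeffX.
move=> t; have [q [Hq1 Hq2]] := Hp t.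
exists ((c * \prod_(j < k) t j ^+ (m (lift ord0 j))) *: 'X^(m ord0) + q).
split.
  move=> x; rewrite mevalD mevalZ mevalX hornerD hornerZ hornerXn Hq1.
  rewrite big_ord_recl /pt unlift_none.
  under eq_bigr => j _ do rewrite liftK.
  congr (_ + _); ring.
move=> e; rewrite coefD coefZ coefXn Hq2 mevalD addrC; congr (_ + _).
case: eqP => [_|_]; last by rewrite meval0 mulr0.
rewrite mevalZ mevalX mulr1; congr (_ * _).
by apply: eq_bigr => j _; rewrite /mtail mnmE.
Qed.

Lemma allroots (R : realType) (p : {poly R}) : (forall x, p.[x] = 0) -> p = 0.
Proof.
move=> H; apply/eqP; apply/negPn/negP => nz.
have h1 : all (root p) [seq i%:R | i <- iota 0 (size p)].
  by apply/allP => x _; rewrite /root H.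
have h2 : uniq [seq i%:R : R | i <- iota 0 (size p)].
  rewrite map_inj_uniq ?iota_uniq // => a b /eqP; rewrite eqr_nat => /eqP.
  done.
have := max_poly_roots nz h1 h2.
by rewrite size_map size_iota ltnn.
Qed.

Lemma vanish (R : realType) k (F : {mpoly R[k]}) : (forall t, F.@[t] = 0) -> F = 0.
Proof.
elim: k F => [|k IH] F H.
  have HF : F = (F@_0%MM)%:MP.
    apply/mpolyP => m; rewrite mcoeffC.
    have -> : m = 0%MM by apply/mnmP; case.
    by rewrite eqxx mulr1.
  move: (H (fun _ => 0)); rewrite HF mevalC => ->; exact: mpolyC0.
have [G [HG Hp]] := decomp F.
have G0 : forall e, G e = 0.
  move=> e; apply: IH => t.
  have [p [Hp1 Hp2]] := Hp t; rewrite -Hp2.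
  have -> : p = 0 by apply: allroots => x; rewrite -Hp1 H.
  by rewrite coef0.
by apply/mpolyP => m; rewrite HG G0 !mcoeff0.
Qed.

Lemma surj {R : realType} {V : vectType R} {n} {T : 'I_n -> {linear V -> R^o}} :
  lin_indep_functionals T -> forall t : 'I_n -> R, exists w : V, forall j, T j w = t j.
Proof.
move=> HT t.
pose A := \matrix_(i < dim V, j < n) T j (VectorInternalTheory.r2v (delta_mx 0 i : 'rV_(dim V))).
have HA : forall u, u *m A = \row_j T j (VectorInternalTheory.r2v u).
  move=> u; apply/rowP => j; rewrite !mxE.
  rewrite [in RHS](row_sum_delta u) linear_sum /= linear_sum /=.
  apply: eq_bigr => i _.
  by rewrite !linearZ /= mxE.
have Hfull : row_full A.
  apply/negPn/negP => nf.
  pose K := kermx A^T.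
  have : K != 0.
    rewrite -mxrank_eq0 mxrank_ker mxrank_tr.
    move: nf; rewrite /row_full; have := rank_leq_col A.
    by rewrite subn_eq0 => h1 h2; rewrite leqNgt ltn_neqAle h2 h1.
  case/matrix0Pn => i [j Kij].
  have AK : A *m K^T = 0 by rewrite -[A]trmxK -trmx_mul mulmx_ker trmx0.
  suff Hc : forall v : V, \sum_(j < n) K i j * T j v = 0.
    by move/eqP: Kij; apply; apply: (HT (fun j => K i j) Hc j).
  move=> v; rewrite -(VectorInternalTheory.v2rK v).
  set u := VectorInternalTheory.v2r v.
  have := congr1 (fun M : 'rV_n => M 0 i) (congr1 (mulmx u) AK).
  rewrite mulmxA mulmx0 !mxE HA => h; rewrite -[RHS]h; apply: eq_bigr => l _.
  by rewrite !mxE mulrC.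
have [B HB] := row_fullP Hfull.
pose tr := \row_j t j.
exists (VectorInternalTheory.r2v (tr *m B)) => j.
have := HA (tr *m B); rewrite -mulmxA HB mulmx1 => /rowP /(_ j); rewrite !mxE.
by move=> ->.
Qed.

Theorem lemma4p1 (R : realType) (V : vectType R) (n : nat)
    (T : 'I_n -> {linear V -> R^o}) (Q : V -> R) (F : {mpoly R[n.+1]}) :
  lin_indep_functionals T ->
  is_quadratic_form Q ->
  (exists v : V, (forall i, T i v = 0) /\ Q v != 0) ->
  (forall v : V, F.@[QT_point Q T v] = 0) ->
  F = 0.
Proof.
move=> HT [B [Bsym Blin BQ]] [v0 [Tv0 Qv0]] HF.
have [G [HG Hp]] := decomp F.
suff G0 : forall e, G e = 0 by apply/mpolyP => m; rewrite HG G0 !mcoeff0.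
move=> e; apply: vanish => t.
have [p [Hp1 Hp2]] := Hp t; rewrite -Hp2.
have [w Hw] := surj HT t.
pose r : {poly R} := (Q v0) *: 'X^2 + (B v0 w + B w v0) *: 'X + (Q w)%:P.
have Hr : forall s, Q (s *: v0 + w) = r.[s].
  move=> s; rewrite /r !(hornerD, hornerZ, hornerXn, hornerX, hornerC) !BQ Blin (Bsym v0) (Bsym w) !Blin.
  ring.
have Hsize : size r = 3%N.
  rewrite /r -addrA size_polyDl size_scale // size_polyXn //.
  apply: (leq_ltn_trans (size_polyD _ _)); rewrite gtn_max.
  apply/andP; split.
    by apply: (leq_ltn_trans (size_scale_leq _ _)); rewrite size_polyX.
  by apply: (leq_ltn_trans (size_polyC_leq1 _)).
have : p \Po r = 0.
  apply: allroots => s; rewrite horner_comp -Hr -Hp1.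
  rewrite -(HF (s *: v0 + w)); apply: meval_eq => i.
  rewrite /pt /QT_point; case: unlift => [j|] //.
  rewrite linearD linearZ /= Tv0 Hw. by rewrite scaler0 add0r.
move/eqP; rewrite comp_poly_eq0 ?Hsize // => /eqP ->.
by rewrite coef0.
Qed.
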